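(* Fix integers $d\ge 1$ and $n\ge 1$. There exists a bijection $\phi_d:\mathcal{H}_n\to\mathcal{H}_n$ such that $\mathrm{dif}_d(\lambda)\ge\mathrm{mod}'_d(\phi_d(\lambda))$ for every $\lambda\in\mathcal{H}_n$. Moreover, for every $\lambda\in\mathcal{H}_n$, $\mathrm{dif}_d(\lambda)=0$ if and only if $\mathrm{mod}'_d(\phi_d(\lambda))=0$.
   Context: A partition is a finite nonempty weakly decreasing sequence $\lambda=(\lambda_1,\ldots,\lambda_k)$ of positive integers; $\ell(\lambda)=k$. The perimeter is $\Gamma(\lambda)=\lambda_1+\ell(\lambda)-1$; $\mathcal{H}_n$ is the set of partitions with perimeter $n$. $\mathrm{dif}_d(\lambda)=|\{i:1\le i<\ell(\lambda),\ \lambda_i-\lambda_{i+1}<d\}|$ and $\mathrm{mod}'_d(\lambda)=|\{i:1\le i\le\ell(\lambda),\ \lambda_i\not\equiv 1\pmod{d+1}\}|$. *)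

(* Defs.v *)
From mathcomp Require Import all_boot.
Set Implicit Arguments. Unset Strict Implicit. Unset Printing Implicit Defensive.

Definition is_partition (l : seq nat) : bool :=
  [&& l != [::], sorted geq l & all (fun x => 0 < x) l].

Definition perimeter (l : seq nat) : nat := head 0 l + size l - 1.

Definition inH (n : nat) (l : seq nat) : bool :=
  is_partition l && (perimeter l == n).

(* dif_d(λ) = #{ i : 1 <= i < ℓ(λ), λ_i - λ_{i+1} < d }  (0-indexed below) *)
Definition dif (d : nat) (l : seq nat) : nat :=
  count (fun i => nth 0 l i - nth 0 l i.+1 < d) (iota 0 (size l).-1).

Definition modp' (d : nat) (l : seq nat) : nat :=
  count (fun x => x %% d.+1 != 1 %% d.+1) l.

(* Main.v *)
Require Import Defs.
From mathcomp Require Import all_boot.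
From mathcomp Require Import zify.

Definition step (p : seq nat) (b : bool) : seq nat :=
  match p with
  | h :: t => if b then h :: h :: t else h.+1 :: t
  | [::] => [::]
  end.

Definition Dw (x : seq bool) := foldl step [:: 1] x.
Definition st (d : nat) (p : seq nat) : nat := (head 0 p).-1 %% d.+1.

Fixpoint Tacc (d : nat) (mu : seq nat) (x : seq bool) : seq bool :=
  match x with
  | [::] => [::]
  | b :: x' => let o := if st d mu == 0 then ~~ b else b in
               o :: Tacc d (step mu o) x'
  end.

Fixpoint Tinv (d : nat) (mu : seq nat) (y : seq bool) : seq bool :=
  match y with
  | [::] => [::]
  | o :: y' => (if st d mu == 0 then ~~ o else o) :: Tinv d (step mu o) y'
  end.

Fixpoint Eaux (c : nat) (r : seq nat) (h : nat) : seq bool :=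
  match r with
  | [::] => nseq (h.-1 - c) false
  | p :: r' => nseq (p.-1 - c) false ++ true :: Eaux p.-1 r' h
  end.

Definition Ew (l : seq nat) : seq bool :=
  match l with [::] => [::] | h :: t => Eaux 0 (rev t) h end.

Lemma Tinv_T d mu x : Tinv d mu (Tacc d mu x) = x.
Proof.
elim: x mu => [|b x IH] mu //=.
by case: (st d mu == 0); rewrite ?negbK IH.
Qed.

Lemma T_Tinv d mu y : Tacc d mu (Tinv d mu y) = y.
Proof.
elim: y mu => [|o y IH] mu //=.
by case: (st d mu == 0); rewrite ?negbK IH.
Qed.

Lemma size_Tacc d mu x : size (Tacc d mu x) = size x.
Proof. by elim: x mu => [|b x IH] mu //=; rewrite IH. Qed.

Lemma size_Tinv d mu x : size (Tinv d mu x) = size x.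
Proof. by elim: x mu => [|b x IH] mu //=; rewrite IH. Qed.

Lemma foldl_step_cons h t x : exists h' t', foldl step (h :: t) x = h' :: t' /\
  h' + size t' = h + size t + size x.
Proof.
elim: x h t => [|b x IH] h t /=; first by exists h, t; rewrite addn0.
case: b.
- have [h' [t' [-> E]]] := IH h (h :: t); exists h', t'; split => //.
  move: E => /= E; rewrite E; lia.
- have [h' [t' [-> E]]] := IH h.+1 t; exists h', t'; split => //.
  move: E => /= E; rewrite E; lia.
Qed.

Lemma perimeter_Dw x : perimeter (Dw x) = (size x).+1.
Proof.
rewrite /Dw; have [h' [t' [-> E]]] := foldl_step_cons 1 [::] x.
rewrite /perimeter /=; move: E => /= E; lia.
Qed.

Lemma step_part p b : is_partition p -> is_partition (step p b).
Proof.
case: p => [|h t] //; rewrite /is_partition /= => /and3P [Hs Hh Ha].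
case: b => /=.
- by rewrite leqnn Hs Hh Ha.
- rewrite Ha andbT; case: t Hs {Ha} => [|p t] //= /andP [Hp ->]; rewrite andbT; exact: leqW.
Qed.

Lemma Dw_part x : is_partition (Dw x).
Proof.
rewrite /Dw; have : is_partition [:: 1] by [].
elim: x [:: 1] => [|b x IH] p Hp //=; apply: IH; exact: step_part.
Qed.

Lemma inH_Dw x n : size x = n.-1 -> 1 <= n -> inH n (Dw x).
Proof.
move=> Hs Hn; rewrite /inH Dw_part perimeter_Dw Hs /=; apply/eqP; lia.
Qed.

Lemma foldl_nseq_false h t k : foldl step (h :: t) (nseq k false) = (h + k) :: t.
Proof. by elim: k h => [|k IH] h /=; rewrite ?addn0 // IH addSnnS. Qed.

Lemma Eaux_D r c acc h : path leq c.+1 r -> last c.+1 r <= h ->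
  foldl step (c.+1 :: acc) (Eaux c r h) = h :: (rev r ++ acc).
Proof.
elim: r c acc => [|p r IH] c acc /=.
- by move=> _ Hh; rewrite foldl_nseq_false; congr (_ :: _); lia.
- move=> /andP [Hp Hr] Hl; rewrite foldl_cat foldl_nseq_false /=.
  have -> : c.+1 + (p.-1 - c) = p by lia.
  have Ep : p = p.-1.+1 by lia.
  by rewrite {1}Ep IH -?Ep // rev_cons cat_rcons.
Qed.

Lemma Dw_Ew l : is_partition l -> Dw (Ew l) = l.
Proof.
case: l => [|h t] //; rewrite /is_partition /= => /and3P [Hs Hh Ha].
rewrite /Dw /Ew Eaux_D ?revK ?cats0 //.
- rewrite path_sortedE; last exact: leq_trans.
  rewrite all_rev Ha /=.
  have : sorted geq t by exact: path_sorted Hs.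
  by rewrite -rev_sorted.
- case: t Hs {Ha} => [|p t] //= /andP [Hp _]; by rewrite rev_cons last_rcons.
Qed.

Lemma Eaux_rcons c r p h :
  Eaux c (rcons r p) h = Eaux c r p ++ true :: Eaux p.-1 [::] h.
Proof. by elim: r c => [|q r IH] c //=; rewrite IH -catA. Qed.

Lemma Eaux_succ r c h : c < h -> all (fun p => 0 < p <= h) r ->
  Eaux c r h.+1 = rcons (Eaux c r h) false.
Proof.
elim: r c => [|p r IH] c /=.
- move=> Hc _; rewrite -cats1 -[[:: false]]/(nseq 1 false) -nseqD; congr nseq; lia.
- move=> Hc /andP [/andP [Hp Hph] Ha]; rewrite IH ?rcons_cat //; lia.
Qed.

Lemma Ew_step p b : is_partition p -> Ew (step p b) = rcons (Ew p) b.
Proof.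
case: p => [|h t] //; rewrite /is_partition /= => /and3P [Hs Hh Ha].
case: b => /=.
- by rewrite rev_cons Eaux_rcons /= subnn cats1.
- rewrite Eaux_succ // all_rev.
  have Hle : all (geq h) t by apply: order_path_min Hs => y x z H1 H2; exact: leq_trans H2 H1.
  apply/allP => p Hp; move/allP: Ha => /(_ p Hp) -> /=.
  by move/allP: Hle => /(_ p Hp).
Qed.

Lemma Ew_Dw x : Ew (Dw x) = x.
Proof.
elim/last_ind: x => [|x b IH] //.
by rewrite /Dw foldl_rcons -/(Dw x) Ew_step ?IH // Dw_part.
Qed.

Lemma dif_cons d a t :
  dif d (a :: t) = ((t != [::]) && (a - head 0 t < d)) + dif d t.
Proof.
case: t => [|b t] //.
rewrite /dif /= -[1]/(1 + 0) iotaDl count_map.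
congr (_ + _); apply: eq_count => i //.
Qed.

Lemma modp_cons d a t :
  modp' d (a :: t) = (a %% d.+1 != 1 %% d.+1) + modp' d t.
Proof. by []. Qed.

Lemma mod_succ m a :
  a.+1 %% m.+1 = if a %% m.+1 == m then 0 else (a %% m.+1).+1.
Proof.
rewrite -addn1 -modnDml.
have := ltn_pmod a (ltn0Sn m).
case: eqP => [->|ne] H; first by rewrite addn1 modnn.
by rewrite modn_small ?addn1 //; lia.
Qed.

Definition Inv (d : nat) (l m : seq nat) : Prop :=
  match l, m with
  | h :: t, h' :: t' =>
    let s := h'.-1 %% d.+1 in
    [/\ modp' d t' <= dif d t,
        s != 0 -> t != [::] /\ (h - head 0 t).+1 <= s,
        t != [::] -> h - head 0 t < d -> 0 < modp' d t' \/ s = (h - head 0 t).+1,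
        (0 < dif d t -> 0 < modp' d t')
      & (head 0 t <= h /\ 0 < h')]
  | _, _ => False
  end.

Lemma Inv_step d l m b : 1 <= d -> Inv d l m ->
  Inv d (step l b) (step m (if st d m == 0 then ~~ b else b)).
Proof.
move=> Hd; case: l => [|h t] //; case: m => [|h' t'] //.
rewrite /st /=.
case: h' => [|a]; first by move=> [_ _ _ _ []]. rewrite /=.
move=> [HA HB HC HD [HE _]].
have Hs := ltn_pmod a (ltn0Sn d).
have H1 : 1 %% d.+1 = 1 by rewrite modn_small.
case: eqP => [s0|sn]; case: b => /=.
-
  rewrite dif_cons mod_succ s0 /=.
  have -> : (0 == d) = false by apply/eqP; lia.
  split => //.
  + lia.
  + move=> _; split => //; rewrite subnn //.
  + by move=> _ _; right; rewrite subnn.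
  + move=> H; have [Hx|Hx] : 0 < dif d t \/ (t != [::]) && (h - head 0 t < d) by
      case: (_ && _) H => /=; [right | left].
    * exact: HD.
    * move/andP: Hx => [Ht Hk]; have [//|] := HC Ht Hk; lia.
-
  rewrite mod_succ s0 H1.
  have -> : (0 == d) = false by apply/eqP; lia.
  rewrite eqxx /= add0n.
  split => //.
  + move=> Ht Hk; case: (HC Ht ltac:(lia)) => H; [by left | rewrite s0 in H; lia].
  + split; lia.
-
  have Hm : (a.+1 %% d.+1 != 1 %% d.+1).
    rewrite mod_succ H1; case: ifP => _; [done | apply/eqP; lia].
  rewrite Hm dif_cons /=.
  have [Ht Hk] := HB (introN eqP sn).
  rewrite Ht /=.
  have -> : h - head 0 t < d by lia.
  split => //.
  + lia.
  + by move=> _ _; left.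
-
  rewrite mod_succ; case: ifP => /eqP Hdd.
  + split; [exact: HA | by rewrite eqxx | | exact: HD | split; lia].
    move=> Ht Hk; case: (HC Ht ltac:(lia)) => H; [by left | lia].
  + have [Ht Hk] := HB (introN eqP sn).
    split; [exact: HA | | | exact: HD | split; lia].
    * move=> _; split => //; lia.
    * move=> _ Hk2; case: (HC Ht ltac:(lia)) => H; [by left | right; lia].
Qed.

Lemma modbit d a : 0 < d -> (a.+1 %% d.+1 != 1 %% d.+1) = (a %% d.+1 != 0).
Proof.
move=> Hd; have H1 : 1 %% d.+1 = 1 by rewrite modn_small.
have Hs := ltn_pmod a (ltn0Sn d).
rewrite mod_succ H1; case: ifP => /eqP H.
- by rewrite H -lt0n Hd.
- by rewrite eqSS.
Qed.

Lemma Inv_final d l m : 0 < d -> Inv d l m ->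
  modp' d m <= dif d l /\ (dif d l = 0 <-> modp' d m = 0).
Proof.
move=> Hd; case: l => [|h t] //; case: m => [|h' t'] //.
case: h' => [|a]; first by move=> [_ _ _ _ []].
move=> [HA HB HC HD [HE _]].
rewrite modp_cons modbit // dif_cons.
have Hle : modp' d t' + (a %% d.+1 != 0) <= dif d t + ((t != [::]) && (h - head 0 t < d)).
  case: eqP => H /=; first by rewrite addn0; apply: leq_trans HA (leq_addr _ _).
  have [Ht Hk] := HB (introN eqP H); rewrite Ht /=.
  have -> : h - head 0 t < d by have := ltn_pmod a (ltn0Sn d); lia.
  lia.
split; first by lia.
split; first by lia.
move=> H0; apply/eqP; rewrite eqn0Ngt; apply/negP => Hpos.
have : (0 < dif d t) || ((t != [::]) && (h - head 0 t < d)).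
  case: ((t != [::]) && _) Hpos => /= Hpos; [by rewrite orbT | by rewrite add0n in Hpos; rewrite Hpos].
case/orP => [/HD|/andP [Ht Hk]]; first by lia.
case: (HC Ht Hk) => H; first by lia.
move: H0; rewrite H /=; lia.
Qed.

Lemma run d x l m : 0 < d -> Inv d l m ->
  Inv d (foldl step l x) (foldl step m (Tacc d m x)).
Proof.
move=> Hd; elim: x l m => [|b x IH] l m //= HI.
apply: IH; exact: Inv_step.
Qed.

Theorem theorem3p6 (d n : nat) : 1 <= d -> 1 <= n ->
  exists phi : seq nat -> seq nat,
    [/\ {in inH n, forall l, inH n (phi l)},
        {in inH n &, injective phi},
        {in inH n, forall m, exists2 l, inH n l & phi l = m},
        {in inH n, forall l, modp' d (phi l) <= dif d l} &
        {in inH n, forall l, dif d l = 0 <-> modp' d (phi l) = 0}].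
Proof.
move=> Hd Hn.
have sizeE : forall l, inH n l -> size (Ew l) = n.-1.
  move=> l /andP [Hp /eqP Hper].
  have := perimeter_Dw (Ew l); rewrite Dw_Ew // Hper; lia.
have Hinv : forall x, let l := Dw x in let m := Dw (Tacc d [:: 1] x) in
    modp' d m <= dif d l /\ (dif d l = 0 <-> modp' d m = 0).
  move=> x l m; apply: Inv_final => //; rewrite /l /m /Dw; apply: run => //.
exists (fun l => Dw (Tacc d [:: 1] (Ew l))); split.
- move=> l Hl; have {}Hl : inH n l := Hl; apply: inH_Dw => //.
  by rewrite size_Tacc sizeE.
- move=> l1 l2 H1 H2 /= E; have {}H1 : inH n l1 := H1; have {}H2 : inH n l2 := H2.
  have := congr1 Ew E; rewrite !Ew_Dw => /(congr1 (Tinv d [:: 1])).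
  rewrite !Tinv_T => /(congr1 Dw); rewrite !Dw_Ew //.
  + by case/andP: H2.
  + by case/andP: H1.
- move=> m Hm; have {}Hm : inH n m := Hm.
  exists (Dw (Tinv d [:: 1] (Ew m))).
  + by apply: inH_Dw => //; rewrite size_Tinv sizeE.
  + rewrite Ew_Dw T_Tinv Dw_Ew //; by case/andP: Hm.
- move=> l Hl; have Hp : is_partition l by case/andP: Hl.
  have [H _] := Hinv (Ew l); by rewrite /= Dw_Ew in H.
- move=> l Hl; have Hp : is_partition l by case/andP: Hl.
  have [_ H] := Hinv (Ew l); by rewrite /= Dw_Ew in H.
Qed.
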